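(* Let $M$ be a model of a complete affine theory $T$ and let $f:M\to M$ be a definable function. Then there exists a type $p(x)\in S_1(T)$ which is $f$-invariant, i.e. $p(\phi(x))=p(\phi(f(x)))$ for every affine formula $\phi(x)$. In particular, if $M$ is $\aleph_0$-saturated then there exists $c\in M$ with $tp(c)=tp(f(c))$.
   Context: Affine continuous logic: $L$-structures are complete metric spaces $(M,d)$ with $d\le1$ and Lipschitz interpretations of function symbols and $[0,1]$-valued relation symbols. Affine formulas are built from $1$ and atomic formulas (including $d$) using only $r\cdot\phi$ ($r\in\mathbb R$), $\phi+\psi$, $\inf_x$, $\sup_x$. $T$ is complete: for each sentence $\phi$ there is a unique $r$ with $T\models\phi=r$. A predicate $P:M^n\to\mathbb R$ is definable (without parameters) if it is a uniform limit of $\phi_k^M$ for affine formulas $\phi_k$; the same sequence defines it in all models of $T$. A function $f:M\to M$ is definable if $(x,y)\mapsto d(f(x),y)$ is a definable predicate; then for every formula $\phi(x)$, $x\mapsto\phi(f(x))$ is a definable predicate. A $1$-type of $T$ is a maximal set of conditions in one variable satisfiable with $T$, identified with a positive linear functional $\phi\mapsto p(\phi)$ on formulas with $p(1)=1$, extended to definable predicates by $p(P)=\lim_kp(\phi_k)$ when $\phi_k\to P$ uniformly. $S_1(T)$ is the set of $1$-types. $tp(c)$ is the type $\phi\mapsto\phi^M(c)$. $M$ is $\aleph_0$-saturated if every type over a finite subset of $M$ is realized in $M$. *)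

(* Defs.v *)
From mathcomp Require Import all_boot all_order all_algebra.
From mathcomp Require Import all_classical all_reals.
Set Implicit Arguments.
Unset Strict Implicit.
Unset Printing Implicit Defensive.
Import Order.TTheory GRing.Theory Num.Theory.
Local Open Scope ring_scope.
Local Open Scope classical_set_scope.

Record language := Language {
  funs : Type;
  fun_ar : funs -> nat;
  rels : Type;
  rel_ar : rels -> nat }.

Section AffineLogic.
Variable R : realType.
Variable L : language.

Definition tuple_dist (M : Type) (d : M -> M -> R) n (a b : 'I_n -> M) : R :=
  \big[Num.max/0]_(i < n) d (a i) (b i).

Record structure := Structure {
  carrier :> Type;
  point : carrier;                              (* nonempty *)
  dist : carrier -> carrier -> R;
  dist_ge0 : forall x y, 0 <= dist x y;
  dist_le1 : forall x y, dist x y <= 1;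
  dist_xx : forall x, dist x x = 0;
  dist_eq0 : forall x y, dist x y = 0 -> x = y;
  dist_sym : forall x y, dist x y = dist y x;
  dist_tri : forall x y z, dist x z <= dist x y + dist y z;
  dist_complete : forall u : nat -> carrier,
      (forall e : R, 0 < e -> exists N, forall m n, (N <= m)%N -> (N <= n)%N ->
          dist (u m) (u n) < e) ->
      exists l, forall e : R, 0 < e -> exists N, forall n, (N <= n)%N ->
          dist (u n) l < e;
  fun_int : forall f : funs L, ('I_(fun_ar f) -> carrier) -> carrier;
  rel_int : forall P : rels L, ('I_(rel_ar P) -> carrier) -> R;
  fun_lip : forall f : funs L, exists K : R, forall a b,
      dist (@fun_int f a) (@fun_int f b) <= K * tuple_dist dist a b;
  rel_range : forall (P : rels L) a, 0 <= @rel_int P a <= 1;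
  rel_lip : forall P : rels L, exists K : R, forall a b,
      `|@rel_int P a - @rel_int P b| <= K * tuple_dist dist a b }.

Arguments fun_int {s} f _.
Arguments rel_int {s} P _.

Inductive aterm :=
  | Tvar : nat -> aterm
  | Tapp : forall f : funs L, ('I_(fun_ar f) -> aterm) -> aterm.

Inductive aformula :=
  | Fone : aformula
  | Fdist : aterm -> aterm -> aformula
  | Frel : forall P : rels L, ('I_(rel_ar P) -> aterm) -> aformula
  | Fscale : R -> aformula -> aformula
  | Fadd : aformula -> aformula -> aformula
  | Finf : aformula -> aformula          (* inf over variable 0 *)
  | Fsup : aformula -> aformula.         (* sup over variable 0 *)

Fixpoint tfv (n : nat) (t : aterm) : Prop :=
  match t with
  | Tvar k => (k < n)%N
  | Tapp f args => forall i, tfv n (args i)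
  end.

Fixpoint ffv (n : nat) (phi : aformula) : Prop :=
  match phi with
  | Fone => True
  | Fdist t s => tfv n t /\ tfv n s
  | Frel P args => forall i, tfv n (args i)
  | Fscale _ psi => ffv n psi
  | Fadd psi chi => ffv n psi /\ ffv n chi
  | Finf psi => ffv n.+1 psi
  | Fsup psi => ffv n.+1 psi
  end.

Definition scons (M : Type) (x : M) (env : nat -> M) : nat -> M :=
  fun k => if k is k'.+1 then env k' else x.

Fixpoint teval (M : structure) (env : nat -> M) (t : aterm) : M :=
  match t with
  | Tvar k => env k
  | Tapp f args => fun_int f (fun i => teval env (args i))
  end.

Fixpoint feval (M : structure) (env : nat -> M) (phi : aformula) : R :=
  match phi with
  | Fone => 1
  | Fdist t s => dist (teval env t) (teval env s)
  | Frel P args => rel_int P (fun i => teval env (args i))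
  | Fscale r psi => r * feval env psi
  | Fadd psi chi => feval env psi + feval env chi
  | Finf psi => inf [set feval (scons x env) psi | x in [set: M]]
  | Fsup psi => sup [set feval (scons x env) psi | x in [set: M]]
  end.

(* environment  x, a_0, ..., a_(n-1)  (variable 0 = x, variable i+1 = a_i) *)
Definition penv (M : structure) (x : M) (a : seq M) : nat -> M :=
  scons x (fun k => nth x a k).

Definition eval1 (M : structure) (x : M) (phi : aformula) : R := feval (penv x [::]) phi.

Definition eval2 (M : structure) (x y : M) (phi : aformula) : R := feval (penv x [:: y]) phi.

(* A 1-type over the finite parameter tuple a (in M), i.e. of the complete theory
   Th_aff(M, a): a positive linear functional with p(1) = 1 on the affine formulas
   phi(x, a) (free variables among x = var 0 and the parameters var 1..|a|).
   Positivity is w.r.t. the theory: if Th(M,a) |= phi >= 0, i.e. phi(b,a) >= 0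
   for all b in M, then p(phi) >= 0.  *)
Definition is_type_over (M : structure) (a : seq M) (p : aformula -> R) : Prop :=
  let n := (size a).+1 in
  [/\ p Fone = 1,
      (forall r phi, ffv n phi -> p (Fscale r phi) = r * p phi),
      (forall phi psi, ffv n phi -> ffv n psi -> p (Fadd phi psi) = p phi + p psi)
    & (forall phi, ffv n phi -> (forall b : M, 0 <= feval (penv b a) phi) -> 0 <= p phi)].

(* S_1(T) for T the complete theory of M (any complete T with M |= T has the
   same consequences, hence the same type space). *)
Definition is_type (M : structure) (p : aformula -> R) : Prop := @is_type_over M [::] p.

Definition realizes_over (M : structure) (a : seq M) (c : M) (p : aformula -> R) : Prop :=
  forall phi, ffv (size a).+1 phi -> p phi = feval (penv c a) phi.

Definition aleph0_saturated (M : structure) : Prop :=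
  forall (a : seq M) (p : aformula -> R), is_type_over a p ->
    exists c : M, realizes_over a c p.

Definition same_type (M : structure) (c d : M) : Prop :=
  forall phi, ffv 1 phi -> eval1 c phi = eval1 d phi.

Definition unif_conv1 (M : structure) (g : nat -> M -> R) (P : M -> R) : Prop :=
  forall e : R, 0 < e -> exists N, forall k, (N <= k)%N -> forall x, `|g k x - P x| <= e.

Definition unif_conv2 (M : structure) (g : nat -> M -> M -> R) (P : M -> M -> R) : Prop :=
  forall e : R, 0 < e -> exists N, forall k, (N <= k)%N -> forall x y,
    `|g k x y - P x y| <= e.

Definition definable_pred1 (M : structure) (P : M -> R) : Prop :=
  exists phis : nat -> aformula, (forall k, ffv 1 (phis k)) /\
    unif_conv1 (fun k x => eval1 x (phis k)) P.

Definition definable_fun (M : structure) (f : M -> M) : Prop :=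
  exists phis : nat -> aformula, (forall k, ffv 2 (phis k)) /\
    unif_conv2 (fun k x y => eval2 x y (phis k)) (fun x y => dist (f x) y).

(* p(P) = v for a definable predicate P: p(phi_k) -> v along some sequence of
   formulas phi_k converging uniformly to P (well defined by positivity). *)
Definition type_pred_value (M : structure) (p : aformula -> R) (P : M -> R) (v : R) : Prop :=
  exists phis : nat -> aformula, (forall k, ffv 1 (phis k)) /\
    unif_conv1 (fun k x => eval1 x (phis k)) P /\
    (forall e : R, 0 < e -> exists N, forall k, (N <= k)%N -> `|p (phis k) - v| <= e).

Definition f_invariant (M : structure) (f : M -> M) (p : aformula -> R) : Prop :=
  forall phi, ffv 1 phi -> type_pred_value p (fun x => eval1 (f x) phi) (p phi).

End AffineLogic.

(* Main.v *)
Require Import Defs.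
From mathcomp Require Import all_boot all_order all_algebra.
From mathcomp Require Import all_classical all_reals.
From mathcomp Require Import topology normedtype.
From mathcomp Require Import ring lra.
Import Order.TTheory GRing.Theory Num.Theory.
Import numFieldNormedType.Exports.
Local Open Scope ring_scope.
Local Open Scope classical_set_scope.
Set Implicit Arguments.
Unset Strict Implicit.

Section Gen.
Variable R : realType.

Lemma abs_small0 (x : R) : (forall e : R, 0 < e -> `|x| <= e) -> x = 0.
Proof.
move=> H; apply/eqP; rewrite -normr_eq0; apply/eqP/le_anti.
rewrite normr_ge0 andbT; apply/ler_addgt0Pr => e he; rewrite add0r; exact: H.
Qed.

Lemma le_eps (x y : R) : (forall e : R, 0 < e -> x <= y + e) -> x <= y.
Proof. by move=> H; apply/ler_addgt0Pr. Qed.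

Lemma inf_shift (T : Type) (t0 : T) (g h : T -> R) (eps : R) :
  (exists B, forall t, `|g t| <= B) ->
  (forall t, g t <= h t + eps) ->
  inf [set g x | x in [set: T]] <= inf [set h x | x in [set: T]] + eps.
Proof.
move=> [B hB] H; rewrite -lerBlDr; apply: lb_le_inf.
  by exists (h t0), t0.
move=> _ [t _ <-]; rewrite lerBlDr.
apply: (le_trans _ (H t)).
have : has_lbound [set g x | x in [set: T]].
  exists (- B) => _ [s _ <-]; rewrite lerNl; apply: le_trans (hB s).
  by rewrite -normrN ler_norm.
by move/ge_inf; apply; exists t.
Qed.

Lemma sup_shift (T : Type) (t0 : T) (g h : T -> R) (eps : R) :
  (exists B, forall t, `|h t| <= B) ->
  (forall t, g t <= h t + eps) ->
  sup [set g x | x in [set: T]] <= sup [set h x | x in [set: T]] + eps.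
Proof.
move=> [B hB] H; apply: ge_sup.
  by exists (g t0), t0.
move=> _ [t _ <-]; apply: (le_trans (H t)); rewrite lerD2r.
have : has_ubound [set h x | x in [set: T]].
  exists B => _ [s _ <-]; apply: le_trans (hB s); exact: ler_norm.
by move/ub_le_sup; apply; exists t.
Qed.

Lemma inf_close (T : Type) (t0 : T) (g h : T -> R) (eps : R) :
  (exists B, forall t, `|g t| <= B) -> (exists B, forall t, `|h t| <= B) ->
  (forall t, `|g t - h t| <= eps) ->
  `|inf [set g x | x in [set: T]] - inf [set h x | x in [set: T]]| <= eps.
Proof.
move=> Hg Hh H; rewrite ler_norml.
have H1 : forall t, h t <= g t + eps.
  by move=> t; move: (H t); rewrite ler_norml => /andP[a b]; lra.
have H2 : forall t, g t <= h t + eps.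
  by move=> t; move: (H t); rewrite ler_norml => /andP[a b]; lra.
have := @inf_shift _ t0 h g eps Hh H1; have := @inf_shift _ t0 g h eps Hg H2.
set a := inf _; set b := inf _ => u v; apply/andP; split; lra.
Qed.

Lemma sup_close (T : Type) (t0 : T) (g h : T -> R) (eps : R) :
  (exists B, forall t, `|g t| <= B) -> (exists B, forall t, `|h t| <= B) ->
  (forall t, `|g t - h t| <= eps) ->
  `|sup [set g x | x in [set: T]] - sup [set h x | x in [set: T]]| <= eps.
Proof.
move=> Hg Hh H; rewrite ler_norml.
have H1 : forall t, h t <= g t + eps.
  by move=> t; move: (H t); rewrite ler_norml => /andP[a b]; lra.
have H2 : forall t, g t <= h t + eps.
  by move=> t; move: (H t); rewrite ler_norml => /andP[a b]; lra.
have := @sup_shift _ t0 h g eps Hg H1; have := @sup_shift _ t0 g h eps Hh H2.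
set a := sup _; set b := sup _ => u v; apply/andP; split; lra.
Qed.

Lemma inf_bound (T : Type) (t0 : T) (g : T -> R) B :
  (forall t, `|g t| <= B) -> `|inf [set g x | x in [set: T]]| <= B.
Proof.
move=> H; have hl : has_lbound [set g x | x in [set: T]].
  exists (- B) => _ [s _ <-]; rewrite lerNl; apply: le_trans (H s).
  by rewrite -normrN ler_norm.
rewrite ler_norml; apply/andP; split.
  apply: lb_le_inf; first by exists (g t0), t0.
  move=> _ [s _ <-]; rewrite lerNl; apply: le_trans (H s).
  by rewrite -normrN ler_norm.
apply: le_trans (H t0); apply: le_trans (ler_norm _).
by apply: (ge_inf hl); exists t0.
Qed.

Lemma sup_bound (T : Type) (t0 : T) (g : T -> R) B :
  (forall t, `|g t| <= B) -> `|sup [set g x | x in [set: T]]| <= B.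
Proof.
move=> H; have hu : has_ubound [set g x | x in [set: T]].
  exists B => _ [s _ <-]; apply: le_trans (H s); exact: ler_norm.
rewrite ler_norml; apply/andP; split.
  apply: le_trans (ub_le_sup hu _); last by exists t0.
  rewrite lerNl; apply: le_trans (H t0); by rewrite -normrN ler_norm.
apply: ge_sup; first by exists (g t0), t0.
by move=> _ [s _ <-]; apply: le_trans (H s); exact: ler_norm.
Qed.
End Gen.


Section Ulim.
Variable R : realType.
Variable G : set_system nat.
Context `{GU : UltraFilter nat G}.
Hypothesis Ginf : \oo `<=` G.

Definition glim (u : nat -> R) (l : R) :=
  forall e : R, 0 < e -> G [set n | `|u n - l| < e].

Lemma G_ge N : G [set n | (N <= n)%N].
Proof. by apply: Ginf; exists N. Qed.

Lemma glim_ex (u : nat -> R) B : (forall n, `|u n| <= B) -> exists l, glim u l.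
Proof.
move=> hB.
have : (u @ G) `[- B, B].
  rewrite /fmap /=; apply: filterS (@filterT _ G _) => n _ /=.
  by rewrite in_itv /= -ler_norml.
move=> /(@segment_compact R (- B) B (u @ G) _) [l [_ cl]].
exists l => e he.
have [//|nS] := in_ultra_setVsetC [set n | `|u n - l| < e] GU.
exfalso.
have FA : (u @ G) [set y : R | e <= `|y - l|].
  rewrite /fmap /=; apply: (filterS _ nS) => n /= /negP; by rewrite -leNgt.
have [y [/= h1]] := cl _ _ FA (@nbhsx_ballx R R (l:R) e he).
rewrite -ball_normE /= => h2.
by move: h1; rewrite distrC => h1; lra.
Qed.

Lemma G_ex {P : set nat} : G P -> exists n, P n.
Proof. by move=> /filter_ex [n Pn]; exists n. Qed.

Lemma glim_unique u a b : glim u a -> glim u b -> a = b.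
Proof.
move=> ha hb; apply/eqP; rewrite -subr_eq0; apply/eqP; apply: abs_small0 => e he.
have he2 : 0 < e / 2 by rewrite divr_gt0.
have [n [/= h1 h2]] := G_ex (@filterI nat G _ _ _ (ha _ he2) (hb _ he2)).
have : `|a - b| <= `|u n - a| + `|u n - b|.
  by rewrite (distrC (u n)); have := ler_normD (a - u n) (u n - b); rewrite addrA subrK.
lra.
Qed.

Lemma glim_const c : glim (fun=> c) c.
Proof. by move=> e he; apply: filterS (@filterT _ G _) => n _ /=; rewrite subrr normr0. Qed.

Lemma glim_add u v a b : glim u a -> glim v b -> glim (fun n => u n + v n) (a + b).
Proof.
move=> ha hb e he.
have he2 : 0 < e / 2 by rewrite divr_gt0.
apply: filterS (@filterI nat G _ _ _ (ha _ he2) (hb _ he2)) => n [/= h1 h2].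
have := ler_normD (u n - a) (v n - b).
have -> : u n - a + (v n - b) = u n + v n - (a + b) by ring.
lra.
Qed.

Lemma glim_scale u a r : glim u a -> glim (fun n => r * u n) (r * a).
Proof.
move=> ha e he.
have hr : 0 < `|r| + 1 by have := normr_ge0 r; lra.
have he2 : 0 < e / (`|r| + 1) by rewrite divr_gt0.
apply: filterS (ha _ he2) => n /= h1.
rewrite -mulrBr normrM.
have h3 : e / (`|r| + 1) * (`|r| + 1) = e by rewrite mulfVK // gt_eqF.
have := normr_ge0 r; have := normr_ge0 (u n - a); nra.
Qed.

Lemma glim_ge0 u a : (forall n, 0 <= u n) -> glim u a -> 0 <= a.
Proof.
move=> h ha; rewrite leNgt; apply/negP => an.
have [n /= hn] := G_ex (ha (- a) ltac:(lra)).
have := h n; move: hn; rewrite ltr_norml; lra.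
Qed.

Lemma glim_abs_le u a c : (exists N, forall n, (N <= n)%N -> `|u n| <= c) ->
  glim u a -> `|a| <= c.
Proof.
move=> [N hN] ha; rewrite leNgt; apply/negP => ca.
have [n [/= h1 h2]] := G_ex (@filterI nat G _ _ _ (ha (`|a| - c) ltac:(lra)) (G_ge N)).
have := hN _ h2.
have : `|a| <= `|u n - a| + `|u n|.
  by have := ler_normD (a - u n) (u n); rewrite subrK distrC.
lra.
Qed.
End Ulim.


Section Syn.
Variables (R : realType) (L : language) (M : structure R L).

Lemma tuple_dist_le n (a b : 'I_n -> M) (c : R) : 0 <= c ->
  (forall i, dist (a i) (b i) <= c) -> tuple_dist (@dist _ _ M) a b <= c.
Proof.
move=> c0 h; rewrite /tuple_dist.
apply: (big_ind (fun v => v <= c)) => //.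
  by move=> x y hx hy; rewrite ge_max hx hy.
Qed.

Lemma tuple_dist_ge0 n (a b : 'I_n -> M) : 0 <= tuple_dist (@dist _ _ M) a b.
Proof.
apply: (big_ind (fun v => 0 <= v)) => //.
  by move=> x y hx hy; rewrite le_max hx.
by move=> i _; apply: dist_ge0.
Qed.

Lemma tlip n (t : aterm L) : tfv n t -> exists C : R, 0 <= C /\
  forall (e1 e2 : nat -> M) (d : R), 0 <= d ->
   (forall k, (k < n)%N -> dist (e1 k) (e2 k) <= d) ->
   dist (teval e1 t) (teval e2 t) <= C * d.
Proof.
elim: t => [k | f args IH] /= hfv.
  by exists 1; split => // e1 e2 d d0 h; rewrite mul1r; apply: h.
have : forall i, exists C : R, 0 <= C /\
  forall (e1 e2 : nat -> M) (d : R), 0 <= d ->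
   (forall k, (k < n)%N -> dist (e1 k) (e2 k) <= d) ->
   dist (teval e1 (args i)) (teval e2 (args i)) <= C * d.
  by move=> i; apply: IH.
case/fin_all_exists => Cs hCs.
have [K hK] := fun_lip M f.
set S := \sum_i Cs i.
have CsS i : Cs i <= S.
  rewrite /S (bigD1 i) //= lerDl; apply: sumr_ge0 => j _; exact: (hCs j).1.
have S0 : 0 <= S by apply: sumr_ge0 => j _; exact: (hCs j).1.
exists (Num.max K 0 * S); split; first by rewrite mulr_ge0 // le_max lexx orbT.
move=> e1 e2 d d0 h.
apply: le_trans (hK _ _) _.
set td := tuple_dist _ _ _.
have td0 : 0 <= td by apply: tuple_dist_ge0.
have tdS : td <= S * d.
  apply: tuple_dist_le; first by rewrite mulr_ge0.
  move=> i; apply: le_trans ((hCs i).2 e1 e2 d d0 h) _.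
  by rewrite ler_wpM2r.
rewrite -mulrA; apply: le_trans (_ : Num.max K 0 * td <= _).
  by rewrite ler_wpM2r // le_max lexx.
by rewrite ler_wpM2l // le_max lexx orbT.
Qed.

Lemma dist_diff (a b a' b' : M) :
  `|dist a b - dist a' b'| <= dist a a' + dist b b'.
Proof.
have h1 := dist_tri a a' b; have h2 := dist_tri a' b' b.
have h3 := dist_tri a' a b'; have h4 := dist_tri a b b'.
rewrite (dist_sym b' b) in h2; rewrite (dist_sym a' a) in h3.
rewrite ler_norml; apply/andP; split; lra.
Qed.

Lemma fbound (phi : aformula R L) : exists B : R, forall env : nat -> M,
  `|feval env phi| <= B.
Proof.
elim: phi => [|t s|P args|r psi [B hB]|psi [B1 h1] chi [B2 h2]|psi [B hB]|psi [B hB]].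
- by exists 1 => env /=; rewrite normr1.
- exists 1 => env /=; rewrite ger0_norm ?dist_ge0 //; exact: dist_le1.
- exists 1 => env /=; have /andP[a b] := @rel_range _ _ M P (fun i => teval env (args i)).
  by rewrite ger0_norm.
- exists (`|r| * B) => env /=; rewrite normrM; apply: ler_wpM2l => //.
- exists (B1 + B2) => env /=; apply: le_trans (ler_normD _ _) _; exact: lerD.
- exists B => env /=; apply: (inf_bound (Defs.point M)) => x; exact: hB.
- exists B => env /=; apply: (sup_bound (Defs.point M)) => x; exact: hB.
Qed.

Lemma flip (phi : aformula R L) : forall n, ffv n phi -> exists C : R, 0 <= C /\
  forall (e1 e2 : nat -> M) (d : R), 0 <= d ->
   (forall k, (k < n)%N -> dist (e1 k) (e2 k) <= d) ->
   `|feval e1 phi - feval e2 phi| <= C * d.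
Proof.
elim: phi => [|t s|P args|r psi IH|psi IH1 chi IH2|psi IH|psi IH] n /= hfv.
- by exists 0; split => // *; rewrite subrr normr0 mul0r.
- case: hfv => /tlip [C1 [C10 h1]] /tlip [C2 [C20 h2]].
  exists (C1 + C2); split; first by rewrite addr_ge0.
  move=> e1 e2 d d0 h; apply: le_trans (dist_diff _ _ _ _) _.
  by rewrite mulrDl; apply: lerD; [apply: h1|apply: h2].
- have : forall i, exists C : R, 0 <= C /\
    forall (e1 e2 : nat -> M) (d : R), 0 <= d ->
     (forall k, (k < n)%N -> dist (e1 k) (e2 k) <= d) ->
     dist (teval e1 (args i)) (teval e2 (args i)) <= C * d.
    by move=> i; apply: tlip.
  case/fin_all_exists => Cs hCs.
  have [K hK] := rel_lip M P.
  set S := \sum_i Cs i.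
  have CsS i : Cs i <= S.
    rewrite /S (bigD1 i) //= lerDl; apply: sumr_ge0 => j _; exact: (hCs j).1.
  have S0 : 0 <= S by apply: sumr_ge0 => j _; exact: (hCs j).1.
  exists (Num.max K 0 * S); split; first by rewrite mulr_ge0 // le_max lexx orbT.
  move=> e1 e2 d d0 h.
  apply: le_trans (hK _ _) _.
  set td := tuple_dist _ _ _.
  have td0 : 0 <= td by apply: tuple_dist_ge0.
  have tdS : td <= S * d.
    apply: tuple_dist_le; first by rewrite mulr_ge0.
    move=> i; apply: le_trans ((hCs i).2 e1 e2 d d0 h) _.
    by rewrite ler_wpM2r.
  rewrite -mulrA; apply: le_trans (_ : Num.max K 0 * td <= _).
    by rewrite ler_wpM2r // le_max lexx.
  by rewrite ler_wpM2l // le_max lexx orbT.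
- have [C [C0 hC]] := IH n hfv.
  exists (`|r| * C); split; first by rewrite mulr_ge0.
  move=> e1 e2 d d0 h; rewrite -mulrBr normrM -mulrA.
  by apply: ler_wpM2l => //; apply: hC.
- case: hfv => /IH1 [C1 [C10 h1]] /IH2 [C2 [C20 h2]].
  exists (C1 + C2); split; first by rewrite addr_ge0.
  move=> e1 e2 d d0 h.
  have -> : feval e1 psi + feval e1 chi - (feval e2 psi + feval e2 chi) =
    (feval e1 psi - feval e2 psi) + (feval e1 chi - feval e2 chi) by ring.
  apply: le_trans (ler_normD _ _) _.
  by rewrite mulrDl; apply: lerD; [apply: h1|apply: h2].
- have [C [C0 hC]] := IH n.+1 hfv.
  exists C; split => // e1 e2 d d0 h.
  have [B hB] := fbound psi.
  apply: (inf_close (Defs.point M)); try by exists B => x; apply: hB.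
  move=> x; apply: hC => // -[|k] /=; first by rewrite dist_xx.
  by rewrite ltnS; apply: h.
- have [C [C0 hC]] := IH n.+1 hfv.
  exists C; split => // e1 e2 d d0 h.
  have [B hB] := fbound psi.
  apply: (sup_close (Defs.point M)); try by exists B => x; apply: hB.
  move=> x; apply: hC => // -[|k] /=; first by rewrite dist_xx.
  by rewrite ltnS; apply: h.
Qed.

Lemma fagree (phi : aformula R L) n (e1 e2 : nat -> M) : ffv n phi ->
  (forall k, (k < n)%N -> e1 k = e2 k) -> feval e1 phi = feval e2 phi.
Proof.
move=> /flip [C [C0 hC]] h; apply/eqP; rewrite -subr_eq0 -normr_eq0.
rewrite eq_le normr_ge0 andbT; rewrite -(mulr0 C); apply: hC => // k /h ->.
by rewrite dist_xx.
Qed.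
End Syn.


Section Ren.
Variables (R : realType) (L : language).

Fixpoint trename (s : nat -> nat) (t : aterm L) : aterm L :=
  match t with
  | Tvar k => Tvar L (s k)
  | Tapp f args => @Tapp L f (fun i => trename s (args i))
  end.

Definition upr (s : nat -> nat) (k : nat) : nat :=
  if k is k'.+1 then (s k').+1 else 0%N.

Fixpoint frename (s : nat -> nat) (phi : aformula R L) : aformula R L :=
  match phi with
  | Fone => Fone R L
  | Fdist t u => @Fdist R L (trename s t) (trename s u)
  | Frel P args => @Frel R L P (fun i => trename s (args i))
  | Fscale r psi => @Fscale R L r (frename s psi)
  | Fadd psi chi => @Fadd R L (frename s psi) (frename s chi)
  | Finf psi => @Finf R L (frename (upr s) psi)
  | Fsup psi => @Fsup R L (frename (upr s) psi)
  end.

Lemma teval_rename (M : structure R L) (env : nat -> M) s t :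
  teval env (trename s t) = teval (fun k => env (s k)) t.
Proof.
elim: t => [k|f args IH] //=; congr fun_int; apply: funext => i; exact: IH.
Qed.

Lemma feval_rename (M : structure R L) phi : forall s (env : nat -> M),
  feval env (frename s phi) = feval (fun k => env (s k)) phi.
Proof.
elim: phi => [|t u|P args|r psi IH|psi IH1 chi IH2|psi IH|psi IH] s env /=.
- by [].
- by rewrite !teval_rename.
- by congr rel_int; apply: funext => i; rewrite teval_rename.
- by rewrite IH.
- by rewrite IH1 IH2.
- congr inf; congr image; apply: funext => x; rewrite IH.
  by congr feval; apply: funext => -[|k].
- congr sup; congr image; apply: funext => x; rewrite IH.
  by congr feval; apply: funext => -[|k].
Qed.

Lemma tfv_rename (t : aterm L) : forall n m s, tfv n t -> (forall k, (k < n)%N -> (s k < m)%N) ->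
  tfv m (trename s t).
Proof.
elim: t => [k|f args IH] n m s /= h hs; first exact: hs.
by move=> i; apply: IH (h i) hs.
Qed.

Lemma ffv_rename (phi : aformula R L) : forall n m s, ffv n phi -> (forall k, (k < n)%N -> (s k < m)%N) ->
  ffv m (frename s phi).
Proof.
elim: phi => [|t u|P args|r psi IH|psi IH1 chi IH2|psi IH|psi IH] n m s /= h hs //.
- by case: h => h1 h2; split; apply: tfv_rename hs.
- by move=> i; apply: tfv_rename (h i) hs.
- exact: IH h hs.
- by case: h => h1 h2; split; [apply: IH1 h1 hs|apply: IH2 h2 hs].
- by apply: IH h _ => -[|k] //=; rewrite !ltnS; apply: hs.
- by apply: IH h _ => -[|k] //=; rewrite !ltnS; apply: hs.
Qed.

Lemma tfv_mono (t : aterm L) : forall n m, tfv n t -> (n <= m)%N -> tfv m t.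
Proof.
elim: t => [k|f args IH] n m /= h hnm; first exact: leq_trans h hnm.
by move=> i; apply: IH (h i) hnm.
Qed.

Lemma ffv_mono (phi : aformula R L) : forall n m, ffv n phi -> (n <= m)%N -> ffv m phi.
Proof.
elim: phi => [|t u|P args|r psi IH|psi IH1 chi IH2|psi IH|psi IH] n m /= h hnm //.
- by case: h => h1 h2; split; apply: tfv_mono hnm.
- by move=> i; apply: tfv_mono (h i) hnm.
- exact: IH h hnm.
- by case: h => h1 h2; split; [apply: IH1 h1 hnm|apply: IH2 h2 hnm].
- by apply: IH h _.
- by apply: IH h _.
Qed.
End Ren.


Section Comp.
Variables (R : realType) (L : language) (M : structure R L).

Definition swap01 (k : nat) : nat :=
  match k with 0 => 1 | 1 => 0 | k => k end%N.

Lemma inf_dist (phi : aformula R L) (C : R) (y : M) :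
  (forall x z : M, `|eval1 x phi - eval1 z phi| <= C * dist x z) ->
  eval1 y phi = inf [set eval1 z phi + C * dist y z | z in [set: M]].
Proof.
move=> hC.
have lb : forall z, eval1 y phi <= eval1 z phi + C * dist y z.
  by move=> z; have := hC y z; rewrite ler_norml => /andP[_ h]; lra.
apply/le_anti/andP; split.
  by apply: lb_le_inf; [exists (eval1 y phi + C * dist y y), y|move=> _ [z _ <-]].
have hl : has_lbound [set eval1 z phi + C * dist y z | z in [set: M]].
  by exists (eval1 y phi) => _ [z _ <-].
have := ge_inf hl (ex_intro2 _ _ y I erefl).
by rewrite dist_xx mulr0 addr0.
Qed.

Lemma comp_def (f : M -> M) : definable_fun f -> forall phi, ffv 1 phi ->
  exists psis : nat -> aformula R L, (forall k, ffv 1 (psis k)) /\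
    unif_conv1 (fun k x => eval1 x (psis k)) (fun x => eval1 (f x) phi).
Proof.
move=> [chis [hfv hconv]] phi hphi.
have [C [C0 hC]] := flip M hphi.
have hC' : forall x z : M, `|eval1 x phi - eval1 z phi| <= C * dist x z.
  by move=> x z; apply: hC; first exact: dist_ge0; move=> [|k] //.
exists (fun k => Finf (Fadd phi (Fscale C (frename swap01 (chis k))))).
split.
  move=> k /=; split; first by apply: ffv_mono hphi _.
  by apply: ffv_rename (hfv k) _ => -[|[|k']].
have eq1 : forall k x, eval1 x (Finf (Fadd phi (Fscale C (frename swap01 (chis k))))) =
    inf [set eval1 z phi + C * eval2 x z (chis k) | z in [set: M]].
  move=> k x; rewrite /eval1 /=; congr inf; congr image; apply: funext => z.
  rewrite feval_rename; congr (_ + _ * _).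
    by apply: fagree hphi _ => -[|k'].
  by apply: fagree (hfv k) _ => -[|[|k']].
have [Bp hBp] := fbound M phi.
move=> e he.
have hC1 : 0 < C + 1 by lra.
have he' : 0 < e / (C + 1) by rewrite divr_gt0.
have [N hN] := hconv _ he'.
exists N => k hk x /=.
rewrite eq1 (inf_dist (f x) hC').
have [Bc hBc] := fbound M (chis k).
apply: le_trans (inf_close (Defs.point M) _ _ (_ : forall z, _ <= C * (e / (C + 1)))) _.
- exists (Bp + C * Bc) => z; apply: le_trans (ler_normD _ _) _; apply: lerD; first exact: hBp.
  by rewrite normrM ger0_norm //; apply: ler_wpM2l => //; exact: hBc.
- exists (Bp + C * 1) => z; apply: le_trans (ler_normD _ _) _; apply: lerD; first exact: hBp.
  rewrite normrM ger0_norm // ger0_norm ?dist_ge0 //; apply: ler_wpM2l => //.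
  exact: dist_le1.
- move=> z; rewrite opprD addrACA subrr add0r -mulrBr normrM ger0_norm //.
  by apply: ler_wpM2l => //; apply: hN.
- have h3 : e / (C + 1) * (C + 1) = e by rewrite mulfVK // gt_eqF.
  have : 0 <= e / (C + 1) by apply: ltW.
  nra.
Qed.
End Comp.


Section Main.
Variables (R : realType) (L : language) (M : structure R L) (f : M -> M).

Definition xs (i : nat) : M := iter i f (Defs.point M).
Definition avg (phi : aformula R L) (n : nat) : R :=
  (n.+1%:R)^-1 * \sum_(i < n.+1) eval1 (xs i) phi.

Lemma avg_bound phi : exists B, 0 <= B /\ forall n, `|avg phi n| <= B.
Proof.
have [B hB] := fbound M phi.
have B0 : 0 <= B by apply: le_trans (hB (fun=> Defs.point M)); exact: normr_ge0.
exists B; split => // n; rewrite /avg normrM ger0_norm ?invr_ge0 //.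
have hn : 0 < n.+1%:R :> R by rewrite ltr0n.
rewrite ler_pdivrMl //; apply: le_trans (ler_norm_sum _ _ _) _.
apply: le_trans (_ : \sum_(i < n.+1) B <= _).
  by apply: ler_sum => i _; exact: hB.
by rewrite sumr_const card_ord mulr_natl.
Qed.

Lemma avg_one n : avg (Fone R L) n = 1.
Proof.
rewrite /avg /eval1 /= sumr_const card_ord -mulr_natl mulr1 mulVf //.
by rewrite pnatr_eq0.
Qed.

Lemma avg_scale r phi n : avg (Fscale r phi) n = r * avg phi n.
Proof. by rewrite /avg /eval1 /= -mulr_sumr mulrCA. Qed.

Lemma avg_add phi psi n : avg (Fadd phi psi) n = avg phi n + avg psi n.
Proof. by rewrite /avg /eval1 /= big_split mulrDr. Qed.

Lemma avg_shift phi psi (e : R) B n : 0 <= B ->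
  (forall x : M, `|eval1 x psi - eval1 (f x) phi| <= e) ->
  (forall x : M, `|eval1 x phi| <= B) ->
  `|avg psi n - avg phi n| <= e + (n.+1%:R)^-1 * (B + B).
Proof.
move=> B0 hpsi hB.
have hn : 0 < n.+1%:R :> R by rewrite ltr0n.
set m := n.+1%:R : R.
have -> : avg psi n - avg phi n = m^-1 * (\sum_(i < n.+1) eval1 (xs i) psi -
   \sum_(i < n.+1) eval1 (xs i) phi) by rewrite /avg; ring.
have -> : \sum_(i < n.+1) eval1 (xs i) psi - \sum_(i < n.+1) eval1 (xs i) phi =
  \sum_(i < n.+1) (eval1 (xs i) psi - eval1 (xs i.+1) phi) +
  \sum_(i < n.+1) (eval1 (xs i.+1) phi - eval1 (xs i) phi).
  by rewrite -big_split /= -sumrB; apply: eq_bigr => i _; ring.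
rewrite -(big_mkord xpredT (fun i => eval1 (xs i.+1) phi - eval1 (xs i) phi)).
rewrite telescope_sumr //.
rewrite normrM ger0_norm; last by rewrite invr_ge0 ltW.
have h1 : `|\sum_(i < n.+1) (eval1 (xs i) psi - eval1 (xs i.+1) phi)| <= m * e.
  apply: le_trans (ler_norm_sum _ _ _) _.
  apply: le_trans (_ : \sum_(i < n.+1) e <= _).
    by apply: ler_sum => i _; exact: (hpsi (xs i)).
  by rewrite sumr_const card_ord mulr_natl.
have h2 : `|eval1 (xs n.+1) phi - eval1 (xs 0) phi| <= B + B.
  by apply: le_trans (ler_normB _ _) _; apply: lerD.
apply: le_trans (_ : m^-1 * (m * e + (B + B)) <= _).
  apply: ler_wpM2l; first by rewrite invr_ge0 ltW.
  by apply: le_trans (ler_normD _ _) _; apply: lerD.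
by rewrite mulrDr mulrA mulVf ?mul1r // gt_eqF.
Qed.
End Main.

Unset Implicit Arguments.
Set Strict Implicit.

Theorem mainTheorem14 (R : realType) (L : language) (M : structure R L)
    (f : M -> M) :
  definable_fun f ->
  (exists p : aformula R L -> R, is_type M p /\ f_invariant f p) /\
  (aleph0_saturated M -> exists c : M, same_type c (f c)).
Proof.
move=> Hdef.
have [G [GU Ginf]] := @ultraFilterLemma nat \oo eventually_filter.
have hl : forall phi, exists l, glim G (avg f phi) l.
  move=> phi; have [B [_ hB]] := avg_bound f phi.
  exact: (@glim_ex _ G GU _ _ hB).
pose p phi := proj1_sig (cid (hl phi)).
have hp : forall phi, glim G (avg f phi) (p phi).
  by move=> phi; rewrite /p; case: (cid (hl phi)).
have ptype : is_type M p.
  split.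
  - apply: (@glim_unique _ G GU (avg f (Fone R L))); first exact: hp.
    have -> : avg f (Fone R L) = (fun=> 1) by apply: funext => n; exact: avg_one.
    exact: glim_const.
  - move=> r phi _; apply: (@glim_unique _ G GU (avg f (Fscale r phi))); first exact: hp.
    have -> : avg f (Fscale r phi) = (fun n => r * avg f phi n).
      by apply: funext => n; exact: avg_scale.
    exact: glim_scale.
  - move=> phi psi _ _; apply: (@glim_unique _ G GU (avg f (Fadd phi psi))); first exact: hp.
    have -> : avg f (Fadd phi psi) = (fun n => avg f phi n + avg f psi n).
      by apply: funext => n; exact: avg_add.
    exact: glim_add.
  - move=> phi _ hpos; apply: (@glim_ge0 _ G GU (avg f phi)) (hp phi) => n.
    rewrite /avg mulr_ge0 ?invr_ge0 //; apply: sumr_ge0 => i _; exact: hpos.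
have pinv : f_invariant f p.
  move=> phi hphi; have [psis [hfv hconv]] := comp_def Hdef hphi.
  exists psis; split => //; split => //.
  move=> e he; have [N hN] := hconv e he; exists N => k hk.
  have [B hB] := fbound M phi.
  have B0 : 0 <= B by apply: le_trans (hB (fun=> Defs.point M)); exact: normr_ge0.
  apply: le_eps => d hd.
  have hu := glim_add (GU:=GU) (hp (psis k)) (glim_scale (GU:=GU) (-1) (hp phi)).
  rewrite -(mulN1r (p phi)).
  apply: (@glim_abs_le _ G GU Ginf _ _ (e + d) _ hu).
  exists (Num.Def.archi_bound ((B + B) / d)) => n hn.
  rewrite mulN1r.
  apply: le_trans (avg_shift (e := e) n B0 _ _) _.
  - move=> x; exact: (hN k hk x).
  - by move=> x; apply: hB.
  rewrite lerD2l.
  have hm : 0 < n.+1%:R :> R by rewrite ltr0n.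
  rewrite ler_pdivrMl //.
  have hx : 0 <= (B + B) / d by apply: divr_ge0; [apply: addr_ge0|apply: ltW].
  have h1 := archi_boundP hx.
  have h2 : (B + B) / d < n.+1%:R.
    apply: lt_le_trans h1 _.
    by rewrite ler_nat; apply: leqW.
  rewrite ltr_pdivrMr // in h2; exact: ltW.
split; first by exists p.
move=> Hsat; have [c hc] := Hsat [::] p ptype.
exists c => phi hphi.
have [psis [hfv [hconv hlim]]] := pinv phi hphi.
apply/eqP; rewrite -subr_eq0; apply/eqP; apply: abs_small0 => e he.
have he2 : 0 < e / 2 by rewrite divr_gt0.
have [N1 h1] := hconv _ he2; have [N2 h2] := hlim _ he2.
have k1 := h1 (maxn N1 N2) (leq_maxl _ _) c.
have k2 := h2 (maxn N1 N2) (leq_maxr _ _).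
rewrite (hc _ (hfv _)) (hc _ hphi) in k2.
have tri : forall a b x : R, `|a - b| <= e / 2 -> `|a - x| <= e / 2 -> `|x - b| <= e.
  move=> a b x; rewrite !ler_norml => /andP[u1 u2] /andP[u3 u4].
  apply/andP; split; lra.
exact: (tri _ _ _ k1 k2).
Qed.
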